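(* Let $p>1$. Then for all $0\le\eta\le1$, $$\psi\!\left(-\frac1p,\eta^{p/(p-1)}\right)=\psi\!\left(\frac1{p-1},\eta\right),$$ where for $\beta>-1$, $\beta\neq0$, and $0\le\eta\le1$, $$\psi(\beta,\eta)=\begin{cases}\dfrac{(1+\eta^{\beta+1})^{1/\beta}}{(1+\eta)^{(\beta+1)/\beta}}+\dfrac{(\beta+1)^{(\beta+1)/\beta}}{\beta}\left[\dfrac1{1+\eta^{\beta+1}}-\dfrac1{1+\eta}\right], & 0\le\eta\le\eta_1(\beta),\\[2ex] 2\dfrac{(1+\eta^{\beta+1})^{1/\beta}}{(1+\eta)^{(\beta+1)/\beta}}, & \eta_1(\beta)\le\eta\le1,\end{cases}$$ and $\eta_1(\beta)\in(0,1)$ is the root of the equation $\eta^\beta=\dfrac{1}{1+\beta(\eta+1)}$. *)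

(* Defs.v *)
(* real powers via powR (0 `^ x = 0 for x <> 0). *)
From HB Require Import structures.
From mathcomp Require Import all_boot all_order all_algebra.
From mathcomp Require Import all_classical all_reals all_analysis.
Set Implicit Arguments. Unset Strict Implicit. Unset Printing Implicit Defensive.
Import Order.TTheory GRing.Theory Num.Theory.
Local Open Scope classical_set_scope.
Local Open Scope ring_scope.

(* eta_1(beta): the root in (0,1) of  eta^beta = 1 / (1 + beta (eta + 1)),
   chosen by (classical) choice; the paper asserts it is "the" root. *)
Definition eta1 {R : realType} (b : R) : R :=
  xget 0 [set x : R | 0 < x < 1 /\ x `^ b = 1 / (1 + b * (x + 1))].

Definition psi_f {R : realType} (b e : R) : R :=
  (1 + e `^ (b + 1)) `^ (1 / b) / (1 + e) `^ ((b + 1) / b).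

Definition psi {R : realType} (b e : R) : R :=
  if e <= eta1 b then
    psi_f b e + (b + 1) `^ ((b + 1) / b) / b *
                ((1 + e `^ (b + 1))^-1 - (1 + e)^-1)
  else 2 * psi_f b e.

(* Main.v *)
Require Import Defs.
From HB Require Import structures.
From mathcomp Require Import all_boot all_order all_algebra.
From mathcomp Require Import all_classical all_reals all_analysis.
From mathcomp Require Import ring lra.
Import Order.TTheory GRing.Theory Num.Theory.
Local Open Scope ring_scope.

Section Aux.
Variable R : realType.
Variable p : R.
Hypothesis hp : 1 < p.

Let p0 : 0 < p. Proof. by move: hp => h; lra. Qed.
Let p1 : p - 1 != 0. Proof. by move: hp => h; apply/eqP; lra. Qed.
Let pn0 : p != 0. Proof. by move: hp => h; apply/eqP; lra. Qed.
Let q0 : 0 < p / (p - 1).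
Proof. by move: hp => h; apply: divr_gt0; lra. Qed.

Lemma key1 (y : R) : 0 < y ->
  (y `^ (1/(p-1)) = 1/(1 + 1/(p-1) * (y+1))) <->
  (y `^ (1/(p-1)) * p + (y `^ (1/(p-1))) `^ p = p - 1).
Proof.
move: hp p0 p1 pn0 => hp' p0' p1' pn0' y0; set t := y `^ (1/(p-1)).
have ht : 0 < t by rewrite /t powR_gt0.
have hy : y = t `^ (p-1).
  by rewrite /t -powRrM (_ : 1/(p-1)*(p-1) = 1) ?powRr1 ?ltW //; field; rewrite ?p1' ?pn0' ?andbT.
have tu : t * y = t `^ p by rewrite [X in t * X]hy mulr_powRB1 ?ltW.
rewrite -tu.
have hpy : p + y != 0 by apply/eqP; lra.
have hD : 1 + 1/(p-1)*(y+1) = (p + y)/(p-1) by field; rewrite ?p1' ?pn0' ?andbT.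
rewrite hD; split => h.
  by rewrite -mulrDr h; field; rewrite p1' hpy.
by apply: (mulIf hpy); rewrite mulrDr h; field; rewrite p1' hpy.
Qed.

Lemma key2 (y : R) : 0 < y ->
  ((y `^ (p/(p-1))) `^ (-(1/p)) = 1/(1 + -(1/p) * (y `^ (p/(p-1)) + 1))) <->
  (y `^ (1/(p-1)) * p + (y `^ (1/(p-1))) `^ p = p - 1).
Proof.
move: hp p0 p1 pn0 => hp' p0' p1' pn0' y0; set t := y `^ (1/(p-1)).
have ht : 0 < t by rewrite /t powR_gt0.
have hx : y `^ (p/(p-1)) = t `^ p.
  by rewrite /t -powRrM; congr (_ `^ _); field; rewrite ?p1' ?pn0' ?andbT.
have hb : (y `^ (p/(p-1))) `^ (-(1/p)) = t^-1.
  by rewrite -powRrM /t -powRN; congr (_ `^ _); field; rewrite ?p1' ?pn0' ?andbT.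
rewrite hb hx; set u := t `^ p.
split => h.
  have hD : 1 + - (1 / p) * (u + 1) != 0.
    apply/eqP => hD; move: h; rewrite hD div1r invr0 => /eqP.
    by rewrite invr_eq0 gt_eqF.
  by move: h; rewrite div1r => /invr_inj ->; field; rewrite ?p1' ?pn0' ?andbT.
have -> : 1 + - (1 / p) * (u + 1) = t.
  have -> : u = p - 1 - t * p by rewrite -h; ring.
  by field; rewrite ?p1' ?pn0' ?andbT.
by rewrite div1r.
Qed.

Lemma in01 (y r : R) : 0 < r -> 0 < y < 1 -> 0 < y `^ r < 1.
Proof.
move=> r0 /andP[y0 y1]; rewrite powR_gt0 //=.
have := @gt0_ltr_powR R r r0 y 1; rewrite !nnegrE powR1 /=.
by apply => //; exact: ltW.
Qed.

Lemma eta1_rel : eta1 (-(1/p)) = (eta1 (1/(p-1))) `^ (p/(p-1))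
  /\ 0 <= eta1 (1/(p-1)).
Proof.
move: hp p0 p1 pn0 q0 => hp' p0' p1' pn0' q0'.
have b0 : 0 < 1/(p-1) by rewrite divr_gt0 //; lra.
have r0 : 0 < (p-1)/p by rewrite divr_gt0 //; lra.
pose P' (y : R) := 0 < y < 1 /\ y `^ (1/(p-1)) = 1/(1 + 1/(p-1)*(y+1)).
pose P (x : R) := 0 < x < 1 /\ x `^ (-(1/p)) = 1/(1 + -(1/p)*(x+1)).
have back : forall x, 0 < x < 1 ->
    0 < x `^ ((p-1)/p) < 1 /\ (x `^ ((p-1)/p)) `^ (p/(p-1)) = x.
  move=> x hx; split; first exact: in01.
  rewrite -powRrM (_ : (p-1)/p * (p/(p-1)) = 1) ?powRr1 //.
    by case/andP: hx => /ltW.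
  by field; rewrite ?p1' ?pn0' ?andbT.
have equiv : forall y, 0 < y < 1 -> P (y `^ (p/(p-1))) <-> P' y.
  move=> y hy; have y0 : 0 < y by case/andP: hy.
  rewrite /P /P' key2 // -key1 //; split; case=> _ h; split => //.
  exact: in01.
have uniq : forall y1 y2, P' y1 -> P' y2 -> y1 = y2.
  move=> y1 y2 [/andP[y10 _] h1] [/andP[y20 _] h2].
  move: h1 h2; rewrite !key1 //.
  set t1 := y1 `^ (1/(p-1)); set t2 := y2 `^ (1/(p-1)) => h1 h2.
  have t10 : 0 <= t1 by rewrite powR_ge0.
  have t20 : 0 <= t2 by rewrite powR_ge0.
  have mono : forall a c, 0 <= a -> 0 <= c -> a < c -> a * p + a `^ p < c * p + c `^ p.
    move=> a c a0 c0 ac; apply: ltrD; first by rewrite ltr_pM2r.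
    by apply: gt0_ltr_powR; rewrite ?nnegrE.
  have et : t1 = t2.
    case: (ltgtP t1 t2) => // [lt|lt].
      by have := mono _ _ t10 t20 lt; rewrite h1 h2 ltxx.
    by have := mono _ _ t20 t10 lt; rewrite h1 h2 ltxx.
  by apply: (powR_injective b0); rewrite ?nnegrE ?ltW.
case: (pselect (exists y, P' y)) => [[y0 Hy0]|none].
  have e' : eta1 (1/(p-1)) = y0 by apply: xget_unique => // z Hz; exact: uniq.
  rewrite e'; split; last by case: Hy0 => /andP[/ltW].
  apply: xget_unique.
    by apply/equiv => //; case: Hy0.
  move=> x Hx; have hx : 0 < x < 1 by case: Hx.
  have [hy ex] := back x hx.
  have : P' (x `^ ((p-1)/p)) by apply/equiv => //; rewrite ex.
  by move/(uniq _ _ Hy0) => ->; rewrite ex.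
have e' : eta1 (1/(p-1)) = 0.
  by apply: xgetPN => z Hz; apply: none; exists z.
rewrite e' powR0 ?gt_eqF //; split => //.
apply: xgetPN => x Hx; have hx : 0 < x < 1 by case: Hx.
have [hy ex] := back x hx.
apply: none; exists (x `^ ((p-1)/p)); apply/equiv => //; rewrite ex.
exact: Hx.
Qed.

End Aux.

Theorem corollary2p2 (R : realType) (p eta : R) :
  1 < p -> 0 <= eta <= 1 ->
  psi (- (1 / p)) (eta `^ (p / (p - 1))) = psi (1 / (p - 1)) eta.
Proof.
move=> hp /andP[e0 e1].
have p0 : 0 < p by lra.
have p1 : p - 1 != 0 by apply/eqP; lra.
have pn0 : p != 0 by apply/eqP; lra.
have q0 : 0 < p / (p - 1) by rewrite divr_gt0 //; lra.
have [er E0] := @eta1_rel R p hp.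
rewrite /psi er; set E := eta1 (1/(p-1)).
have cond : (eta `^ (p/(p-1)) <= E `^ (p/(p-1))) = (eta <= E).
  apply/idP/idP => h.
    rewrite leNgt; apply/negP => lt.
    have := gt0_ltr_powR q0 _ _ lt; rewrite !nnegrE => /(_ E0 e0).
    by rewrite ltNge h.
  by apply: ge0_ler_powR; rewrite ?nnegrE // ltW.
have ee : (eta `^ (p / (p - 1))) `^ (- (1 / p) + 1) = eta.
  by rewrite -powRrM (_ : p/(p-1) * (-(1/p)+1) = 1) ?powRr1 //; field; rewrite ?p1 ?pn0.
have hf : psi_f (-(1/p)) (eta `^ (p/(p-1))) = psi_f (1/(p-1)) eta.
  rewrite /psi_f ee (_ : 1 / -(1/p) = -p); last by field; rewrite ?p1 ?pn0.
  rewrite (_ : (-(1/p) + 1) / -(1/p) = -(p-1)); last by field; rewrite ?p1 ?pn0.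
  rewrite (_ : 1 / (1/(p-1)) = p-1); last by field; rewrite ?p1 ?pn0.
  rewrite (_ : (1/(p-1) + 1) / (1/(p-1)) = p); last by field; rewrite ?p1 ?pn0.
  rewrite (_ : 1/(p-1) + 1 = p/(p-1)); last by field; rewrite ?p1 ?pn0.
  by rewrite !powRN invrK mulrC.
rewrite cond hf; case: ifP => _ //.
congr (_ + _).
rewrite ee.
rewrite (_ : (-(1/p) + 1) / -(1/p) = -(p-1)); last by field; rewrite ?p1 ?pn0.
rewrite (_ : (1/(p-1) + 1) / (1/(p-1)) = p); last by field; rewrite ?p1 ?pn0.
rewrite (_ : 1/(p-1) + 1 = p/(p-1)); last by field; rewrite ?p1 ?pn0.
rewrite (_ : -(1/p) + 1 = (p/(p-1))^-1); last by field; rewrite ?p1 ?pn0.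
rewrite -(powR_inv1 (ltW q0)) -powRrM mulN1r opprK.
rewrite -(mulr_powRB1 (ltW q0) p0).
set Q := (p/(p-1)) `^ (p-1).
set A := (1 + eta)^-1; set B := (1 + eta `^ (p/(p-1)))^-1.
by field; rewrite ?p1 ?pn0.
Qed.
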